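(* Let $\mathcal P=\mathcal P_n(\alpha,\ell)$ be a quasi-regular curvilinear $n$-gon (all interior angles equal to $\alpha$, all side lengths equal to $\ell$) with $\alpha\in(0,\pi)\setminus\mathcal E$. Then the set of its quasi-eigenvalues (as a set of values, without multiplicity) is $$\Big\{\tfrac1\ell\Big(\pm\arccos\big(\sin(\tfrac{\pi^2}{2\alpha})\cos(\tfrac{2\pi q}{n})\big)+2\pi m\Big):\ m\in\mathbb N\cup\{0\},\ q=0,1,\dots,\lfloor n/2\rfloor\Big\}\cap[0,+\infty).$$ Each such quasi-eigenvalue has multiplicity two, except in the following cases, where it has multiplicity one: (i) $\alpha\notin\mathcal S$ and $q=0$; (ii) $\alpha\notin\mathcal S$, $n$ even and $q=n/2$; (iii) $\alpha\in\mathcal S$ even, $q=0$ and $m=0$ (the quasi-eigenvalue $0$); (iv) $\alpha\in\mathcal S$ odd, $n$ even, $q=n/2$ and $m=0$ (the quasi-eigenvalue $0$).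
   Context: $\mathcal E=\{\pi/(2k):k\in\mathbb N\}$ (exceptional angles), $\mathcal S=\{\pi/(2k+1):k\in\mathbb N\}$ (special angles); a special angle $\pi/(2k+1)$ is called even or odd according as $k$ is even or odd. A curvilinear polygon $\mathcal P(\boldsymbol\alpha,\boldsymbol\ell)$: bounded simply connected planar domain bounded by $n$ smooth arcs of lengths $\ell_j$, vertices $V_1,\dots,V_n$ clockwise, interior angle $\alpha_j\in(0,\pi)$ at $V_j$. For $\alpha\notin\mathcal E$, $\mathtt A(\alpha)=\begin{pmatrix}\csc\frac{\pi^2}{2\alpha}&-i\cot\frac{\pi^2}{2\alpha}\\ i\cot\frac{\pi^2}{2\alpha}&\csc\frac{\pi^2}{2\alpha}\end{pmatrix}$, $\mathtt B(\ell,\sigma)=\operatorname{diag}(e^{i\ell\sigma},e^{-i\ell\sigma})$. For a polygon without exceptional angles, $\sigma\ge0$ is a quasi-eigenvalue iff $1$ is an eigenvalue of $\mathtt T(\sigma)=\mathtt A(\alpha_n)\mathtt B(\ell_n,\sigma)\cdots\mathtt A(\alpha_1)\mathtt B(\ell_1,\sigma)$; the multiplicity of a quasi-eigenvalue $\sigma>0$ is the geometric multiplicity of the eigenvalue $1$ of $\mathtt T(\sigma)$, and the quasi-eigenvalue $0$ (if present) has multiplicity $1$. *)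

(* Defs.v *)
From Stdlib Require Import Reals Lra Lia List.
Open Scope R_scope.

Definition C : Type := (R * R)%type.
Definition Cre (z : C) : R := fst z.
Definition Cim (z : C) : R := snd z.
Definition C0 : C := (0, 0).
Definition C1 : C := (1, 0).
Definition RtoC (x : R) : C := (x, 0).
Definition Cadd (z w : C) : C := (fst z + fst w, snd z + snd w).
Definition Cmul (z w : C) : C :=
  (fst z * fst w - snd z * snd w, fst z * snd w + snd z * fst w).
Definition Ci : C := (0, 1).
Definition Cexpi (t : R) : C := (cos t, sin t).

Record M2 : Type := mkM2 { m11 : C; m12 : C; m21 : C; m22 : C }.
Definition V2 : Type := (C * C)%type.

Definition M2mul (X Y : M2) : M2 :=
  mkM2 (Cadd (Cmul (m11 X) (m11 Y)) (Cmul (m12 X) (m21 Y)))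
       (Cadd (Cmul (m11 X) (m12 Y)) (Cmul (m12 X) (m22 Y)))
       (Cadd (Cmul (m21 X) (m11 Y)) (Cmul (m22 X) (m21 Y)))
       (Cadd (Cmul (m21 X) (m12 Y)) (Cmul (m22 X) (m22 Y))).
Definition M2id : M2 := mkM2 C1 C0 C0 C1.
Definition M2app (X : M2) (v : V2) : V2 :=
  (Cadd (Cmul (m11 X) (fst v)) (Cmul (m12 X) (snd v)),
   Cadd (Cmul (m21 X) (fst v)) (Cmul (m22 X) (snd v))).
Definition V2zero : V2 := (C0, C0).
Definition V2add (v w : V2) : V2 := (Cadd (fst v) (fst w), Cadd (snd v) (snd w)).
Definition V2scale (a : C) (v : V2) : V2 := (Cmul a (fst v), Cmul a (snd v)).

Definition exceptional (a : R) : Prop :=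
  exists k : nat, (1 <= k)%nat /\ a = PI / (2 * INR k).
Definition special (a : R) : Prop :=
  exists k : nat, (1 <= k)%nat /\ a = PI / (2 * INR k + 1).
Definition special_even (a : R) : Prop :=
  exists k : nat, (1 <= k)%nat /\ Nat.Even k /\ a = PI / (2 * INR k + 1).
Definition special_odd (a : R) : Prop :=
  exists k : nat, (1 <= k)%nat /\ Nat.Odd k /\ a = PI / (2 * INR k + 1).

Definition csc (x : R) : R := 1 / sin x.
Definition cot (x : R) : R := cos x / sin x.
Definition Amat (a : R) : M2 :=
  let t := PI ^ 2 / (2 * a) in
  mkM2 (RtoC (csc t)) (0, - cot t) (0, cot t) (RtoC (csc t)).
Definition Bmat (l s : R) : M2 :=
  mkM2 (Cexpi (l * s)) C0 C0 (Cexpi (- (l * s))).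

(** T(s) = A(alpha_n) B(l_n,s) ... A(alpha_1) B(l_1,s), for the list of
    vertex data [(alpha_1,l_1); ...; (alpha_n,l_n)]. *)
Definition Tmat (data : list (R * R)) (s : R) : M2 :=
  fold_left (fun acc p => M2mul (M2mul (Amat (fst p)) (Bmat (snd p) s)) acc)
            data M2id.

Definition eig1 (X : M2) : Prop :=
  exists v : V2, v <> V2zero /\ M2app X v = v.
Definition lin_indep (v w : V2) : Prop :=
  forall a b : C, V2add (V2scale a v) (V2scale b w) = V2zero -> a = C0 /\ b = C0.
Definition two_indep_fixed (X : M2) : Prop :=
  exists v w : V2, lin_indep v w /\ M2app X v = v /\ M2app X w = w.
Definition geom_mult1 (X : M2) (k : nat) : Prop :=
  match k with
  | 0%nat => ~ eig1 X
  | 1%nat => eig1 X /\ ~ two_indep_fixed X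
  | 2%nat => two_indep_fixed X
  | _ => False
  end.

(** Quasi-eigenvalues of a polygon without exceptional angles. *)
Definition quasi_eig (data : list (R * R)) (s : R) : Prop :=
  0 <= s /\ eig1 (Tmat data s).
Definition qe_mult (data : list (R * R)) (s : R) (k : nat) : Prop :=
  quasi_eig data s /\
  (s = 0 -> k = 1%nat) /\ (0 < s -> geom_mult1 (Tmat data s) k).

Definition qreg (n : nat) (a l : R) : list (R * R) := repeat (a, l) n.

Definition qreg_value (n : nat) (a l : R) (sgn : R) (m q : nat) : R :=
  / l * (sgn * acos (sin (PI ^ 2 / (2 * a)) * cos (2 * PI * INR q / INR n))
         + 2 * PI * INR m).

Definition mult_one_case (n : nat) (a : R) (m q : nat) : Prop :=
  (~ special a /\ q = 0%nat) \/
  (~ special a /\ Nat.Even n /\ q = (n / 2)%nat) \/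
  (special_even a /\ q = 0%nat /\ m = 0%nat) \/
  (special_odd a /\ Nat.Even n /\ q = (n / 2)%nat /\ m = 0%nat).

(* Main.v *)
Require Import Defs.
From Stdlib Require Import Reals Lra Lia List ZArith.
Open Scope R_scope.

Definition Mc (c d th : R) : M2 :=
  mkM2 (c*cos th, c*sin th) (-(d*sin th), -(d*cos th))
       (-(d*sin th), d*cos th) (c*cos th, -(c*sin th)).
Definition Form (p q : R) (M : M2) : M2 :=
  mkM2 (p*fst(m11 M) - q, p*snd(m11 M)) (p*fst (m12 M), p*snd(m12 M))
       (p*fst(m21 M), p*snd(m21 M)) (p*fst(m22 M) - q, p*snd(m22 M)).
Fixpoint Mpow (M:M2) (k:nat) : M2 :=
  match k with O => M2id | S k => M2mul M (Mpow M k) end.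
Fixpoint U (tau:R) (k:nat) : R :=
  match k with
  | O => 0
  | S k' => match k' with O => 1 | S k'' => 2*tau*U tau k' - U tau k'' end
  end.

Lemma U_SS tau k : U tau (S (S k)) = 2*tau*U tau (S k) - U tau k.
Proof. reflexivity. Qed.

Lemma Tmat_qreg n a l s :
  Tmat (qreg n a l) s = Mpow (M2mul (Amat a) (Bmat l s)) n.
Proof.
  unfold Tmat, qreg. induction n as [|n IH]; [reflexivity|].
  change (repeat (a,l) (S n)) with ((a,l) :: repeat (a,l) n).
  rewrite repeat_cons, fold_left_app, IH. reflexivity.
Qed.

Lemma AB_Mc a l s :
  M2mul (Amat a) (Bmat l s) = Mc (csc (PI^2/(2*a))) (cot (PI^2/(2*a))) (l*s).
Proof.
  unfold Amat, Bmat, Mc, M2mul, Cexpi, RtoC, C0, Cadd, Cmul; simpl.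
  rewrite cos_neg, sin_neg. f_equal; f_equal; ring.
Qed.

Lemma step_gen (M : M2) tau p q :
  fst (m11 M) + fst (m22 M) = 2*tau -> snd (m11 M) + snd (m22 M) = 0 ->
  fst (m11 M) * fst (m22 M) - snd (m11 M) * snd (m22 M)
   - (fst (m12 M) * fst (m21 M) - snd (m12 M) * snd (m21 M)) = 1 ->
  fst (m11 M) * snd (m22 M) + snd (m11 M) * fst (m22 M)
   - (fst (m12 M) * snd (m21 M) + snd (m12 M) * fst (m21 M)) = 0 ->
  M2mul M (Form p q M) = Form (2*tau*p - q) p M.
Proof.
  destruct M as [[a1 a2] [b1 b2] [c1 c2] [d1 d2]]; simpl.
  intros H1 H2 H3 H4.
  assert (d1 = 2*tau - a1) by lra. assert (d2 = - a2) by lra. subst d1 d2.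
  assert (H3' := f_equal (fun z => p*z) H3). assert (H4' := f_equal (fun z => p*z) H4).
  simpl in H3', H4'.
  unfold M2mul, Form, Cadd, Cmul; simpl. f_equal; f_equal; lra.
Qed.

Definition Sm (ur ui wr wi : R) : M2 :=
  mkM2 (ur+1, ui) (wr, wi) (wr, -wi) (ur+1, -ui).

Lemma pair_eq (x y x' y' : R) : (x, y) = (x', y') -> x = x' /\ y = y'.
Proof. intros H; injection H; auto. Qed.

Lemma indep_D a1 a2 b1 b2 c1 c2 e1 e2 :
  lin_indep ((a1,a2),(b1,b2)) ((c1,c2),(e1,e2)) ->
  a1*e1 - a2*e2 - (b1*c1 - b2*c2) = 0 ->
  a1*e2 + a2*e1 - (b1*c2 + b2*c1) = 0 -> False.
Proof.
  intros H Dr Di.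
  destruct (H (e1,e2) (-b1,-b2)) as [Ha Hb].
  { unfold V2add, V2scale, V2zero, Cmul, Cadd, C0; simpl. f_equal; f_equal; lra. }
  apply pair_eq in Ha; apply pair_eq in Hb.
  destruct Ha as [-> ->]; destruct Hb as [Hb1 Hb2].
  assert (b1 = 0) by lra; assert (b2 = 0) by lra; subst b1 b2.
  destruct (H (c1,c2) (-a1,-a2)) as [Ha Hb].
  { unfold V2add, V2scale, V2zero, Cmul, Cadd, C0; simpl. f_equal; f_equal; lra. }
  apply pair_eq in Ha; apply pair_eq in Hb.
  destruct Ha as [-> ->]; destruct Hb as [Hb3 Hb4].
  assert (a1 = 0) by lra; assert (a2 = 0) by lra; subst a1 a2.
  destruct (H (1,0) (0,0)) as [Ha _].
  { unfold V2add, V2scale, V2zero, Cmul, Cadd, C0; simpl. f_equal; f_equal; lra. }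
  unfold C0 in Ha. apply pair_eq in Ha. lra.
Qed.

Ltac mul4 E a b c d :=
  pose proof (f_equal (fun t => a*t) E); pose proof (f_equal (fun t => b*t) E);
  pose proof (f_equal (fun t => c*t) E); pose proof (f_equal (fun t => d*t) E).

Lemma eig_Sm ur ui wr wi :
  eig1 (Sm ur ui wr wi) <-> ur*ur+ui*ui = wr*wr+wi*wi.
Proof.
  split.
  - intros [[[x1 y1] [x2 y2]] [Hnz Hv]].
    unfold Sm, M2app, Cadd, Cmul in Hv; simpl in Hv.
    injection Hv as E1 E2 E3 E4.
    set (r := ur*ur+ui*ui - (wr*wr+wi*wi)).
    mul4 E1 ur ui wr wi; mul4 E2 ur ui wr wi; mul4 E3 ur ui wr wi; mul4 E4 ur ui wr wi.
    simpl in *.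
    assert (R1 : r * x1 = 0) by (unfold r; lra).
    assert (R2 : r * y1 = 0) by (unfold r; lra).
    assert (R3 : r * x2 = 0) by (unfold r; lra).
    assert (R4 : r * y2 = 0) by (unfold r; lra).
    destruct (Req_dec r 0) as [Hr|Hr]; [unfold r in Hr; lra|].
    exfalso; apply Hnz.
    apply Rmult_integral in R1, R2, R3, R4.
    destruct R1, R2, R3, R4; try contradiction; subst; reflexivity.
  - intros H.
    destruct (Req_dec (wr*wr+wi*wi) 0) as [Hw|Hw].
    + assert (wr = 0) by nra. assert (wi = 0) by nra.
      assert (ur = 0) by nra. assert (ui = 0) by nra. subst.
      exists ((1,0),(0,0)). split.
      * unfold V2zero, C0. intros E. injection E. lra.
      * unfold Sm, M2app, Cadd, Cmul; simpl. f_equal; f_equal; ring.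
    + exists ((wr,wi),(-ur,-ui)). split.
      * unfold V2zero, C0. intros E. injection E. intros. subst. lra.
      * unfold Sm, M2app, Cadd, Cmul; simpl. f_equal; f_equal; lra.
Qed.

Lemma two_Sm ur ui wr wi :
  two_indep_fixed (Sm ur ui wr wi) -> ur = 0 /\ ui = 0 /\ wr = 0 /\ wi = 0.
Proof.
  intros [[[a1 a2] [b1 b2]] [[[c1 c2] [e1 e2]] [Hi [Hv Hw]]]].
  unfold Sm, M2app, Cadd, Cmul in Hv, Hw; simpl in Hv, Hw.
  injection Hv as E1 E2 E3 E4. injection Hw as F1 F2 F3 F4.
  set (Dr := a1*e1 - a2*e2 - (b1*c1 - b2*c2)).
  set (Di := a1*e2 + a2*e1 - (b1*c2 + b2*c1)).
  assert (HD : Dr*Dr + Di*Di <> 0).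
  { intros HD. assert (Dr = 0) by nra. assert (Di = 0) by nra.
    apply (indep_D _ _ _ _ _ _ _ _ Hi); assumption. }
  mul4 E1 c1 c2 e1 e2; mul4 E2 c1 c2 e1 e2; mul4 E3 c1 c2 e1 e2; mul4 E4 c1 c2 e1 e2.
  mul4 F1 a1 a2 b1 b2; mul4 F2 a1 a2 b1 b2; mul4 F3 a1 a2 b1 b2; mul4 F4 a1 a2 b1 b2.
  simpl in *.
  assert (U1 : ur*Dr - ui*Di = 0) by (unfold Dr, Di; lra).
  assert (U2 : ur*Di + ui*Dr = 0) by (unfold Dr, Di; lra).
  assert (W1 : wr*Dr - wi*Di = 0) by (unfold Dr, Di; lra).
  assert (W2 : wr*Di + wi*Dr = 0) by (unfold Dr, Di; lra).
  clearbody Dr Di.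
  clear -U1 U2 W1 W2 HD.
  mul4 U1 Dr Di Dr Di; mul4 U2 Dr Di Dr Di; mul4 W1 Dr Di Dr Di; mul4 W2 Dr Di Dr Di.
  simpl in *.
  assert (ur*(Dr*Dr+Di*Di) = 0) by lra.
  assert (ui*(Dr*Dr+Di*Di) = 0) by lra.
  assert (wr*(Dr*Dr+Di*Di) = 0) by lra.
  assert (wi*(Dr*Dr+Di*Di) = 0) by lra.
  repeat match goal with
  | H : ?x * (Dr*Dr+Di*Di) = 0 |- _ =>
     apply Rmult_integral in H; destruct H as [H|H]; [|contradiction]
  end.
  auto.
Qed.

Lemma two_Sm0 : two_indep_fixed (Sm 0 0 0 0).
Proof.
  exists ((1,0),(0,0)), ((0,0),(1,0)). split; [|split].
  - unfold lin_indep. intros [x y] [z w] E. unfold V2add, V2scale, V2zero, Cmul, Cadd, C0 in E; simpl in E.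
    injection E; intros. unfold C0. split; f_equal; lra.
  - unfold Sm, M2app, Cadd, Cmul; simpl. f_equal; f_equal; ring.
  - unfold Sm, M2app, Cadd, Cmul; simpl. f_equal; f_equal; ring.
Qed.

Lemma pair_ind (P : nat -> Prop) : P O -> P 1%nat ->
  (forall k, P k -> P (S k) -> P (S (S k))) -> forall k, P k.
Proof.
  intros H0 H1 HS k. assert (P k /\ P (S k)) as [? _]; [|assumption].
  induction k as [|k [IH1 IH2]]; auto.
Qed.

Lemma cheb_id tau k :
  U tau (S k) * U tau (S k) - 2*tau*U tau (S k)*U tau k + U tau k * U tau k = 1.
Proof.
  induction k as [|k IH]; [simpl; ring|].
  rewrite U_SS. rewrite <- IH. ring.
Qed.

Definition Tq tau k := tau * U tau (S k) - U tau k.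

Lemma Tq_SS tau k : Tq tau (S (S k)) = 2*tau*Tq tau (S k) - Tq tau k.
Proof. unfold Tq. rewrite !U_SS. ring. Qed.

Lemma cos_rec x p : cos (x + p) = 2 * cos p * cos x - cos (x - p).
Proof. rewrite cos_plus, cos_minus. ring. Qed.
Lemma sin_rec x p : sin (x + p) = 2 * cos p * sin x - sin (x - p).
Proof. rewrite sin_plus, sin_minus. ring. Qed.

Lemma Tq_cos tau p : tau = cos p -> forall k, Tq tau k = cos (INR (S k) * p).
Proof.
  intros Ht. apply pair_ind.
  - unfold Tq; simpl. rewrite Rmult_1_l. subst; ring.
  - unfold Tq; simpl. replace ((1+1)*p) with (2*p) by ring. rewrite cos_2a_cos. subst; ring.
  - intros k H0 H1. rewrite Tq_SS, H0, H1.
    replace (INR (S (S (S k))) * p) with (INR (S (S k)) * p + p) by (rewrite !S_INR; ring).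
    rewrite cos_rec. subst tau. f_equal. f_equal. rewrite !S_INR; ring.
Qed.

Lemma U_sin tau p : tau = cos p -> forall k, U tau k * sin p = sin (INR k * p).
Proof.
  intros Ht. apply pair_ind.
  - simpl. rewrite !Rmult_0_l, sin_0. ring.
  - simpl. ring_simplify (1*p). ring.
  - intros k H0 H1. rewrite U_SS.
    replace (INR (S (S k)) * p) with (INR (S k) * p + p) by (rewrite !S_INR; ring).
    rewrite sin_rec. subst tau.
    replace (INR (S k) * p - p) with (INR k * p) by (rewrite !S_INR; ring).
    rewrite <- H0, <- H1. ring.
Qed.

Lemma U_one k : U 1 k = INR k.
Proof.
  revert k; apply pair_ind; [reflexivity|reflexivity|].
  intros k H0 H1. rewrite U_SS, H0, H1. rewrite !S_INR. ring.
Qed.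

Lemma U_mone k : U (-1) k = (-1)^(S k) * INR k.
Proof.
  revert k; apply pair_ind; [simpl; ring|simpl; ring|].
  intros k H0 H1. rewrite U_SS, H0, H1. rewrite !S_INR. simpl. ring.
Qed.

Lemma Tq_big tau : 1 < tau -> forall k, 1 < Tq tau k /\ Tq tau k < Tq tau (S k).
Proof.
  intros Ht k. induction k as [|k [IH1 IH2]].
  - unfold Tq; simpl. nra.
  - split; [lra|]. rewrite Tq_SS. nra.
Qed.

Lemma Tq_small tau : tau < -1 -> forall k,
  (Tq tau k < -1 /\ Tq tau (S k) > - Tq tau k) \/ (Tq tau k > 1 /\ Tq tau (S k) < - Tq tau k).
Proof.
  intros Ht k. induction k as [|k [[IH1 IH2]|[IH1 IH2]]].
  - left. unfold Tq; simpl. nra.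
  - right. split; [lra|]. rewrite Tq_SS. nra.
  - left. split; [lra|]. rewrite Tq_SS. nra.
Qed.

Lemma Tq_ne1 tau k : 1 < Rabs tau -> Tq tau k <> 1.
Proof.
  intros H. destruct (Rle_dec 0 tau).
  - rewrite Rabs_right in H by lra. destruct (Tq_big tau H k). lra.
  - rewrite Rabs_left in H by lra. destruct (Tq_small tau ltac:(lra) k) as [[]|[]]; lra.
Qed.

Lemma Z_nat (k : Z) : (0 <= k)%Z -> IZR k = INR (Z.to_nat k).
Proof. intros H. rewrite INR_IZR_INZ, Z2Nat.id; auto. Qed.

Lemma sin_nPI j : sin (INR j * PI) = 0.
Proof. apply sin_eq_0_1. exists (Z.of_nat j). rewrite INR_IZR_INZ. reflexivity. Qed.

Lemma cos_2nPI j : cos (2 * PI * INR j) = 1.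
Proof.
  replace (2*PI*INR j) with (2*(INR j*PI)) by ring.
  rewrite cos_2a_sin, sin_nPI. ring.
Qed.

Lemma sin_2nPI j : sin (2 * PI * INR j) = 0.
Proof.
  replace (2*PI*INR j) with (2*(INR j*PI)) by ring.
  rewrite sin_2a, sin_nPI. ring.
Qed.

Lemma cos_eq1 x : cos x = 1 -> exists k : Z, x = IZR k * (2*PI).
Proof.
  intros H. replace x with (2*(x/2)) in H by field.
  rewrite cos_2a_sin in H.
  assert (sin (x/2) = 0) by nra.
  destruct (sin_eq_0_0 _ H0) as [k Hk]. exists k. lra.
Qed.

Section T.
Variable a : R.
Hypothesis Ha : 0 < a < PI.
Let t := PI^2/(2*a).

Lemma t_big : PI/2 < t.
Proof.
  unfold t. pose proof PI_RGT_0.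
  assert (E : PI^2/(2*a) = PI/2 * (PI/a)) by (field; lra).
  assert (PI / a * a = PI) by (field; lra).
  rewrite E. nra.
Qed.

Lemma sin_t_ne : ~ exceptional a -> sin t <> 0.
Proof.
  intros Hne Hs. apply Hne. pose proof PI_RGT_0. pose proof t_big.
  destruct (sin_eq_0_0 _ Hs) as [k Hk].
  assert (0 < IZR k) by nra.
  apply lt_IZR in H1.
  exists (Z.to_nat k). split; [lia|].
  rewrite <- Z_nat by lia.
  assert (IZR k = PI/(2*a)) by (unfold t in Hk; apply Rmult_eq_reg_r with PI; [|lra];
     rewrite <- Hk; field; lra).
  rewrite H2. field; lra.
Qed.

Lemma cos_t0_special : cos t = 0 -> special a.
Proof.
  intros Hc. pose proof PI_RGT_0. pose proof t_big.
  destruct (cos_eq_0_0 _ Hc) as [k Hk].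
  assert (0 < IZR k) by nra.
  apply lt_IZR in H1.
  exists (Z.to_nat k). split; [lia|].
  rewrite <- Z_nat by lia.
  assert (Hk0 : IZR k * PI = PI^2/(2*a) - PI/2) by (unfold t in Hk; lra).
  assert (IZR k = PI/(2*a) - 1/2) by (apply Rmult_eq_reg_r with PI; [|lra];
     rewrite Hk0; field; lra).
  rewrite H2. field; lra.
Qed.

Lemma t_special k : a = PI / (2 * INR k + 1) -> t = INR k * PI + PI/2.
Proof.
  intros ->. unfold t. pose proof PI_RGT_0. pose proof (pos_INR k). field. lra.
Qed.

Lemma special_cos : special a -> cos t = 0.
Proof.
  intros [k [_ Hk]]. rewrite (t_special k Hk). apply cos_eq_0_1.
  exists (Z.of_nat k). rewrite INR_IZR_INZ. reflexivity.
Qed.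

Lemma special_even_sin : special_even a -> sin t = 1.
Proof.
  intros [k [_ [[j ->] Hk]]]. rewrite (t_special _ Hk).
  rewrite sin_plus, sin_PI2, cos_PI2, mult_INR.
  replace (INR 2 * INR j * PI) with (2*PI*INR j) by (simpl; ring).
  rewrite cos_2nPI. ring.
Qed.

Lemma special_odd_sin : special_odd a -> sin t = -1.
Proof.
  intros [k [_ [[j ->] Hk]]]. rewrite (t_special _ Hk).
  rewrite sin_plus, sin_PI2, cos_PI2, plus_INR, mult_INR.
  replace ((INR 2 * INR j + INR 1) * PI) with (2*PI*INR j + PI) by (simpl; ring).
  rewrite neg_cos, cos_2nPI. ring.
Qed.

Lemma special_split : special a -> special_even a \/ special_odd a.
Proof.
  intros [k [Hk1 Hk]]. destruct (Nat.Even_or_Odd k).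
  - left; exists k; auto.
  - right; exists k; auto.
Qed.

Lemma even_odd_excl : special_even a -> special_odd a -> False.
Proof.
  intros H1 H2. pose proof (special_even_sin H1). pose proof (special_odd_sin H2). lra.
Qed.

End T.

Lemma theta_decomp th x : 0 <= th -> -1 <= x <= 1 -> cos th = x ->
  exists sgn (m : nat), (sgn = 1 \/ sgn = -1) /\ th = sgn * acos x + 2*PI*INR m.
Proof.
  intros Hth Hx Hc. pose proof PI_RGT_0.
  destruct (base_Int_part (th/(2*PI))) as [B1 B2].
  set (k := Int_part (th/(2*PI))) in *.
  assert (0 <= th/(2*PI)) by (unfold Rdiv; apply Rmult_le_pos; [lra|left; apply Rinv_0_lt_compat; lra]).
  assert (-1 < IZR k) by lra.
  assert (0 <= k)%Z by (apply lt_IZR in H1; lia).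
  rewrite (Z_nat k H2) in B1, B2. set (m := Z.to_nat k) in *.
  set (r := th - 2*PI*INR m).
  assert (Hr1 : 0 <= r).
  { unfold r. assert (INR m * (2*PI) <= th/(2*PI)*(2*PI)) by (apply Rmult_le_compat_r; lra).
    replace (th/(2*PI)*(2*PI)) with th in H3 by (field; lra). lra. }
  assert (Hr2 : r < 2*PI).
  { unfold r. assert (th/(2*PI)*(2*PI) < (INR m + 1) * (2*PI)) by (apply Rmult_lt_compat_r; lra).
    replace (th/(2*PI)*(2*PI)) with th in H3 by (field; lra). lra. }
  assert (Hcr : cos r = x).
  { rewrite <- Hc. replace th with (r + 2 * INR m * PI) by (unfold r; ring).
    rewrite cos_period. reflexivity. }
  destruct (Rle_dec r PI).
  - exists 1, m. split; [left; reflexivity|].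
    rewrite <- Hcr, acos_cos by lra. unfold r; ring.
  - exists (-1), (S m). split; [right; reflexivity|].
    assert (cos (2*PI - r) = x).
    { rewrite <- Hcr. replace (2*PI - r) with (- r + 2 * INR 1 * PI) by (simpl; ring).
      rewrite cos_period, cos_neg. reflexivity. }
    rewrite <- H3, acos_cos by lra. rewrite S_INR. unfold r; ring.
Qed.

Lemma q_of_cos (k : nat) p : 0 <= p <= PI -> cos (INR (S k) * p) = 1 ->
  exists q : nat, (q <= S k / 2)%nat /\ p = 2*PI*INR q / INR (S k).
Proof.
  intros Hp Hc. pose proof PI_RGT_0.
  destruct (cos_eq1 _ Hc) as [z Hz].
  assert (Hn : 0 < INR (S k)) by (apply lt_0_INR; lia).
  assert (0 <= INR (S k) * p) by nra.
  assert (0 <= z)%Z by (apply le_IZR; nra).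
  rewrite (Z_nat z H1) in Hz. set (q := Z.to_nat z) in *.
  exists q. split.
  - assert (INR (S k) * p <= INR (S k) * PI) by nra.
    assert (G1 : PI*(2*INR q) <= PI*INR (S k)) by lra.
    apply Rmult_le_reg_l in G1; [|lra].
    assert (G2 : INR (2*q) <= INR (S k)) by (rewrite mult_INR; replace (INR 2) with 2 by (simpl; ring); lra).
    apply INR_le in G2.
    pose proof (Nat.div_mod (S k) 2). pose proof (Nat.mod_upper_bound (S k) 2). lia.
  - apply Rmult_eq_reg_l with (INR (S k)); [|lra]. rewrite Hz. field. lra.
Qed.

Lemma pow_gen (M : M2) tau :
  fst (m11 M) + fst (m22 M) = 2*tau -> snd (m11 M) + snd (m22 M) = 0 ->
  fst (m11 M) * fst (m22 M) - snd (m11 M) * snd (m22 M)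
   - (fst (m12 M) * fst (m21 M) - snd (m12 M) * snd (m21 M)) = 1 ->
  fst (m11 M) * snd (m22 M) + snd (m11 M) * fst (m22 M)
   - (fst (m12 M) * snd (m21 M) + snd (m12 M) * fst (m21 M)) = 0 ->
  forall k, Mpow M (S k) = Form (U tau (S k)) (U tau k) M.
Proof.
  intros H1 H2 H3 H4 k. induction k as [|k IH].
  - destruct M as [[a1 a2] [b1 b2] [c1 c2] [d1 d2]].
    unfold Mpow, M2mul, M2id, Form, Cadd, Cmul, C0, C1; simpl. f_equal; f_equal; ring.
  - change (Mpow M (S (S k))) with (M2mul M (Mpow M (S k))).
    rewrite IH, (step_gen M tau) by assumption. rewrite U_SS. reflexivity.
Qed.

Lemma sc2 th : sin th * sin th + cos th * cos th = 1.
Proof. pose proof (sin2_cos2 th). unfold Rsqr in H. lra. Qed.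

Lemma Mc_pow c d th k : c*c - d*d = 1 ->
  Mpow (Mc c d th) (S k) =
  Sm (U (c*cos th) (S k)*(c*cos th) - U (c*cos th) k - 1)
     (U (c*cos th) (S k)*(c*sin th))
     (U (c*cos th) (S k)*(-(d*sin th)))
     (U (c*cos th) (S k)*(-(d*cos th))).
Proof.
  intros Hcd. rewrite (pow_gen (Mc c d th) (c*cos th)).
  - unfold Form, Sm, Mc; simpl. f_equal; f_equal; ring.
  - simpl; ring.
  - simpl; ring.
  - simpl. pose proof (sc2 th).
    replace (c * cos th * (c * cos th) - c * sin th * - (c * sin th) -
      (- (d * sin th) * - (d * sin th) - - (d * cos th) * (d * cos th)))
    with ((c*c - d*d) * (sin th * sin th + cos th * cos th)) by ring.
    rewrite Hcd, H. ring.
  - simpl; ring.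
Qed.

Lemma eig_Mc c d th k : c*c - d*d = 1 ->
  (eig1 (Mpow (Mc c d th) (S k)) <-> Tq (c*cos th) k = 1).
Proof.
  intros Hcd. rewrite Mc_pow by assumption. rewrite eig_Sm.
  pose proof (cheb_id (c*cos th) k) as Ch. pose proof (sc2 th) as Sc.
  set (P := U (c*cos th) (S k)) in *. set (Q := U (c*cos th) (k)) in *.
  unfold Tq. fold P Q.
  assert (E : (P * (c * cos th) - Q - 1) * (P * (c * cos th) - Q - 1) +
    P * (c * sin th) * (P * (c * sin th)) -
    (P * - (d * sin th) * (P * - (d * sin th)) + P * - (d * cos th) * (P * - (d * cos th)))
    = 2 * (1 + Q - c * cos th * P)).
  { transitivity (P*P*((c*c - d*d) * (sin th * sin th + cos th * cos th))
        - 2*c*cos th*P*(Q+1) + (Q+1)*(Q+1)); [ring|].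
    rewrite Hcd, Sc. lra. }
  split; intros; lra.
Qed.

Lemma two_Mc c d th k : c*c - d*d = 1 ->
  two_indep_fixed (Mpow (Mc c d th) (S k)) ->
  U (c*cos th) (S k) * d = 0.
Proof.
  intros Hcd H. rewrite Mc_pow in H by assumption. apply two_Sm in H.
  destruct H as [_ [_ [H1 H2]]]. pose proof (sc2 th).
  set (P := U (c*cos th) (S k)) in *.
  assert (E : (P*d)*(P*d) = (P * - (d * sin th))*(P * - (d * sin th)) + (P * - (d * cos th))*(P * - (d * cos th))).
  { transitivity ((P*d)*(P*d)*(sin th * sin th + cos th * cos th)); [rewrite H; ring|ring]. }
  rewrite H1, H2 in E. nra.
Qed.

Lemma two_Mc_rev c d th k : c*c - d*d = 1 ->
  U (c*cos th) (S k) * (c*cos th) - U (c*cos th) k - 1 = 0 ->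
  U (c*cos th) (S k) * (c*sin th) = 0 ->
  U (c*cos th) (S k) * (-(d*sin th)) = 0 ->
  U (c*cos th) (S k) * (-(d*cos th)) = 0 ->
  two_indep_fixed (Mpow (Mc c d th) (S k)).
Proof.
  intros Hcd H1 H2 H3 H4. rewrite Mc_pow by assumption.
  rewrite H1, H2, H3, H4. apply two_Sm0.
Qed.


Lemma half_eq (n q : nat) : (2*q = n)%nat <-> (Nat.Even n /\ q = n/2)%nat.
Proof.
  pose proof (Nat.div_mod n 2). pose proof (Nat.mod_upper_bound n 2).
  split.
  - intros H1. split; [exists q; lia|lia].
  - intros [[j Hj] Hq]. lia.
Qed.

Theorem proposition1p10 (n : nat) (a l : R) :
  (1 <= n)%nat -> 0 < a < PI -> ~ exceptional a -> 0 < l ->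
  (forall s : R,
     quasi_eig (qreg n a l) s <->
     exists (sgn : R) (m q : nat),
       (sgn = 1 \/ sgn = -1) /\ (q <= n / 2)%nat /\
       s = qreg_value n a l sgn m q /\ 0 <= s) /\
  (forall (sgn : R) (m q : nat),
     (sgn = 1 \/ sgn = -1) -> (q <= n / 2)%nat ->
     0 <= qreg_value n a l sgn m q ->
     (mult_one_case n a m q -> qe_mult (qreg n a l) (qreg_value n a l sgn m q) 1%nat) /\
     (~ mult_one_case n a m q -> qe_mult (qreg n a l) (qreg_value n a l sgn m q) 2%nat)).
Proof.
  intros Hn Ha Hne Hl.
  pose proof PI_RGT_0 as HPI.
  pose proof (sin_t_ne a Ha Hne) as Hst.
  destruct n as [|k]; [lia|].
  set (t := PI^2/(2*a)) in *.
  set (c := csc t). set (d := cot t).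
  assert (Hcd : c*c - d*d = 1).
  { unfold c, d, csc, cot. pose proof (sc2 t). field_simplify_eq; [|assumption]. lra. }
  assert (Hcs : c * sin t = 1) by (unfold c, csc; field; auto).
  assert (HT : forall s, Tmat (qreg (S k) a l) s = Mpow (Mc c d (l*s)) (S k))
    by (intros; rewrite Tmat_qreg, AB_Mc; reflexivity).
  assert (HQ : forall s, quasi_eig (qreg (S k) a l) s <-> 0 <= s /\ Tq (c*cos(l*s)) k = 1).
  { intros s. unfold quasi_eig. rewrite HT, eig_Mc by exact Hcd. tauto. }
  set (N := INR (S k)).
  assert (HN : 0 < N) by (apply lt_0_INR; lia).
  set (phi := fun q : nat => 2*PI*INR q / N).
  assert (Hphi : forall q, (q <= S k / 2)%nat -> 0 <= phi q <= PI).
  { intros q Hq. pose proof (Nat.div_mod (S k) 2). pose proof (Nat.mod_upper_bound (S k) 2).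
    assert (G : (2*q <= S k)%nat) by lia. apply le_INR in G. rewrite mult_INR in G.
    replace (INR 2) with 2 in G by (simpl; ring). fold N in G. pose proof (pos_INR q).
    unfold phi. split.
    - apply Rmult_le_pos; [nra|]. left; apply Rinv_0_lt_compat; lra.
    - apply Rmult_le_reg_r with N; [lra|].
      replace (2 * PI * INR q / N * N) with (PI * (2 * INR q)) by (field; lra).
      apply Rmult_le_compat_l; lra. }
  set (x := fun q : nat => sin t * cos (phi q)).
  assert (Hx : forall q, -1 <= x q <= 1).
  { intros q. unfold x. pose proof (SIN_bound t). pose proof (COS_bound (phi q)). split; nra. }
  assert (Hval : forall sgn m q, (sgn = 1 \/ sgn = -1) ->
            cos (l * qreg_value (S k) a l sgn m q) = x q).
  { intros sgn m q Hsg. unfold qreg_value. fold t. fold N. fold (phi q). fold (x q).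
    replace (l * (/ l * (sgn * acos (x q) + 2 * PI * INR m)))
      with (sgn * acos (x q) + 2 * INR m * PI) by (field; lra).
    rewrite cos_period. destruct Hsg as [-> | ->].
    - rewrite Rmult_1_l, cos_acos; auto.
    - replace (-1 * acos (x q)) with (- acos (x q)) by ring. rewrite cos_neg, cos_acos; auto. }
  assert (Hcx : forall q, c * x q = cos (phi q)).
  { intros q. unfold x. rewrite <- Rmult_assoc, Hcs. ring. }
  assert (HTq : forall q, Tq (cos (phi q)) k = 1).
  { intros q. rewrite (Tq_cos _ (phi q) eq_refl). unfold phi. fold N.
    replace (N * (2 * PI * INR q / N)) with (2*PI*INR q) by (field; lra).
    apply cos_2nPI. }
  split.
  - intros s. rewrite HQ. split.
    + intros [Hs HT1].
      set (tau := c * cos (l*s)) in *.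
      assert (Htau : -1 <= tau <= 1).
      { destruct (Rle_dec (Rabs tau) 1) as [H|H].
        - unfold Rabs in H. destruct (Rcase_abs tau); lra.
        - exfalso. apply (Tq_ne1 tau k); [lra|assumption]. }
      set (p := acos tau).
      assert (Hp : tau = cos p) by (unfold p; rewrite cos_acos; auto).
      rewrite (Tq_cos tau p Hp) in HT1.
      destruct (q_of_cos k p (acos_bound tau) HT1) as [q [Hq Hpq]].
      assert (Hc : cos (l*s) = x q).
      { unfold x. fold N in Hpq. change (2*PI*INR q/N) with (phi q) in Hpq.
        rewrite <- Hpq, <- Hp. unfold tau. rewrite <- (Rmult_1_l (cos (l*s))) at 1.
        rewrite <- Hcs. ring. }
      destruct (theta_decomp (l*s) (x q) ltac:(nra) (Hx q) Hc) as [sgn [m [Hsg Hth]]].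
      exists sgn, m, q. repeat split; auto.
      unfold qreg_value. fold t N. fold (phi q) (x q). rewrite <- Hth. field. lra.
    + intros [sgn [m [q [Hsg [Hq [-> Hs]]]]]]. split; [assumption|].
      rewrite Hval, Hcx by assumption. apply HTq.
  - intros sgn m q Hsg Hq Hs.
    set (s := qreg_value (S k) a l sgn m q) in *.
    assert (Hcth : cos (l*s) = x q) by (apply Hval; assumption).
    assert (Htau : c * cos (l*s) = cos (phi q)) by (rewrite Hcth; apply Hcx).
    assert (Hqe : quasi_eig (qreg (S k) a l) s).
    { apply HQ. split; [assumption|]. rewrite Htau. apply HTq. }
    assert (HT1 : Tq (c * cos (l*s)) k = 1) by (apply HQ; assumption).
    pose proof (Hphi q Hq) as Hpq.
    assert (Hphi0 : phi 0%nat = 0) by (unfold phi; simpl; field; lra).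
    assert (HphiPI : forall q, (2*q = S k)%nat -> phi q = PI).
    { intros q' H'. unfold phi. apply (f_equal INR) in H'. rewrite mult_INR in H'.
      replace (INR 2) with 2 in H' by (simpl; ring). fold N in H'. rewrite <- H'.
      field. lra. }
    assert (Hs0 : s = 0 -> mult_one_case (S k) a m q).
    { intros Hs0. unfold s, qreg_value in Hs0. fold t N in Hs0. fold (phi q) (x q) in Hs0.
      apply Rmult_integral in Hs0. destruct Hs0 as [Hs0|Hs0].
      { exfalso. apply (Rinv_neq_0_compat l); lra. }
      pose proof (acos_bound (x q)) as HA.
      assert (Hm0 : m = 0%nat).
      { destruct m as [|m]; [reflexivity|]. exfalso. rewrite S_INR in Hs0.
        pose proof (pos_INR m). destruct Hsg as [-> | ->]; nra. }
      subst m. simpl in Hs0.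
      assert (HA0 : acos (x q) = 0) by (destruct Hsg as [-> | ->]; lra).
      assert (Hx1 : x q = 1) by (rewrite <- (cos_acos (x q)) by apply Hx; rewrite HA0; apply cos_0).
      unfold x in Hx1.
      pose proof (SIN_bound t). pose proof (COS_bound (phi q)).
      assert (Heq : sin t = cos (phi q)) by nra.
      assert (Hsq : sin t = 1 \/ sin t = -1) by nra.
      pose proof (sc2 t) as Sc.
      assert (Hct : cos t = 0) by nra.
      pose proof (cos_t0_special a Ha Hct) as Hsp.
      destruct Hsq as [Hs1|Hs1].
      - right; right; left. split; [|split; [|reflexivity]].
        + destruct (special_split a Hsp) as [|Ho]; auto.
          pose proof (special_odd_sin a Ha Ho). fold t in H1. lra.
        + assert (phi q = 0).
          { rewrite <- (acos_cos (phi q)) by assumption. rewrite <- Heq, Hs1. apply acos_1. }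
          unfold phi in H1. assert (INR q = 0).
          { assert (E : INR q = (2*PI*INR q/N) * N/(2*PI)) by (field; lra).
            rewrite H1 in E. rewrite E. field. lra. }
          apply INR_eq. simpl. assumption.
      - assert (H2q : (2*q = S k)%nat).
        { assert (phi q = PI).
          { rewrite <- (acos_cos (phi q)) by assumption. rewrite <- Heq, Hs1.
            replace (-1) with (Ropp 1) by ring. rewrite acos_opp, acos_1. ring. }
          unfold phi in H1. apply INR_eq. rewrite mult_INR. fold N.
          replace (INR 2) with 2 by (simpl; ring).
          assert (E : 2 * INR q = (2*PI*INR q/N) * N/PI) by (field; lra).
          rewrite H1 in E. rewrite E. field. lra. }
        destruct (proj1 (half_eq _ _) H2q) as [Hev Hq2].
        right; right; right. split; [|split; [|split; [|reflexivity]]]; auto.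
        destruct (special_split a Hsp) as [He|]; auto.
        pose proof (special_even_sin a Ha He). fold t in H1. lra. }
    split.
    + intros Hm. split; [assumption|]. split; [reflexivity|].
      intros Hpos. split; [apply Hqe|]. intros Htwo.
      rewrite HT in Htwo. apply two_Mc in Htwo; [|exact Hcd].
      assert (Hdn : ~ special a -> d <> 0).
      { intros Hns Hd. apply Hns. apply (cos_t0_special a Ha). fold t.
        unfold d, cot in Hd. assert (cos t = cos t / sin t * sin t) by (field; auto).
        rewrite Hd in H. lra. }
      destruct Hm as [[Hns Hq0]|[[Hns [Hev Hq2]]|[[Hse [Hq0 Hm0]]|[Hso [Hev [Hq2 Hm0]]]]]].
      * subst q. rewrite Htau, Hphi0, cos_0, U_one in Htwo. fold N in Htwo.
        apply Rmult_integral in Htwo. destruct Htwo; [lra|]. apply (Hdn Hns); assumption.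
      * assert (H2q : (2*q = S k)%nat) by (apply half_eq; auto).
        rewrite Htau, (HphiPI q H2q), cos_PI, U_mone in Htwo. fold N in Htwo.
        apply Rmult_integral in Htwo. destruct Htwo as [Hz|Hz]; [|apply (Hdn Hns); assumption].
        apply Rmult_integral in Hz. destruct Hz as [Hz|Hz]; [|lra].
        apply (pow_nonzero (-1) (S (S k))); [lra|assumption].
      * exfalso. subst q m. assert (Hx1 : x 0%nat = 1).
        { unfold x. rewrite Hphi0, cos_0. pose proof (special_even_sin a Ha Hse) as E. fold t in E. rewrite E. ring. }
        assert (s = 0).
        { unfold s, qreg_value. fold t N. fold (phi 0%nat) (x 0%nat). rewrite Hx1, acos_1. simpl. field. lra. }
        lra.
      * exfalso. subst m. assert (H2q : (2*q = S k)%nat) by (apply half_eq; auto).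
        assert (Hx1 : x q = 1).
        { unfold x. rewrite (HphiPI q H2q), cos_PI. pose proof (special_odd_sin a Ha Hso) as E. fold t in E. rewrite E. ring. }
        assert (s = 0).
        { unfold s, qreg_value. fold t N. fold (phi q) (x q). rewrite Hx1, acos_1. simpl. field. lra. }
        lra.
    + intros Hm. split; [assumption|]. split.
      * intros Hs0'. exfalso. apply Hm, Hs0, Hs0'.
      * intros Hpos. unfold geom_mult1. rewrite HT.
        assert (Hsp_case : special a -> (cos (phi q) = 1 \/ cos (phi q) = -1) ->
                 two_indep_fixed (Mpow (Mc c d (l * s)) (S k))).
        { intros Hsp Hcp. pose proof (special_cos a Ha Hsp) as Hct. fold t in Hct.
          assert (Hd0 : d = 0) by (unfold d, cot; rewrite Hct; field; auto).
          assert (Hst2 : sin t * sin t = 1) by (pose proof (sc2 t); nra).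
          assert (Hc2 : cos (l*s) * cos (l*s) = 1)
            by (rewrite Hcth; unfold x; destruct Hcp as [E|E]; rewrite E; nra).
          assert (Hsn : sin (l*s) = 0) by (pose proof (sc2 (l*s)); nra).
          apply two_Mc_rev; [exact Hcd| | | |].
          - unfold Tq in HT1. lra.
          - rewrite Hsn; ring.
          - rewrite Hd0; ring.
          - rewrite Hd0; ring. }
        assert (Hspec : (q = 0 \/ 2*q = S k)%nat -> special a).
        { intros Hqq. destruct (Req_dec (cos t) 0) as [Hct|Hct].
          - apply (cos_t0_special a Ha). exact Hct.
          - exfalso. apply Hm. assert (Hns : ~ special a)
              by (intros Hsp; apply Hct; apply (special_cos a Ha Hsp)).
            destruct Hqq as [Hqq|Hqq].
            + left. auto.
            + right; left. split; [auto|]. apply half_eq; auto. }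
        destruct (Nat.eq_dec q 0) as [Hq0|Hq0];
          [|destruct (Nat.eq_dec (2*q) (S k)) as [H2q|H2q]].
        -- apply Hsp_case; [apply Hspec; auto|]. left. subst q. rewrite Hphi0. apply cos_0.
        -- apply Hsp_case; [apply Hspec; auto|]. right. rewrite (HphiPI q H2q). apply cos_PI.
        -- assert (Hlt : (2*q < S k)%nat).
           { pose proof (Nat.div_mod (S k) 2). pose proof (Nat.mod_upper_bound (S k) 2). lia. }
           assert (Hp0 : 0 < phi q).
           { unfold phi. assert (0 < INR q) by (apply lt_0_INR; lia).
             unfold Rdiv. apply Rmult_lt_0_compat; [nra|apply Rinv_0_lt_compat; lra]. }
           assert (HpPI : phi q < PI).
           { apply lt_INR in Hlt. rewrite mult_INR in Hlt. replace (INR 2) with 2 in Hlt by (simpl; ring).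
             fold N in Hlt. unfold phi. apply Rmult_lt_reg_r with N; [lra|].
             replace (2 * PI * INR q / N * N) with (PI * (2 * INR q)) by (field; lra).
             apply Rmult_lt_compat_l; lra. }
           pose proof (sin_gt_0 _ Hp0 HpPI) as Hsp.
           assert (HP : U (c * cos (l*s)) (S k) = 0).
           { pose proof (U_sin _ _ Htau (S k)) as E.
             replace (INR (S k) * phi q) with (2*PI*INR q) in E by (unfold phi; fold N; field; lra).
             rewrite sin_2nPI in E. apply Rmult_integral in E. destruct E; [assumption|lra]. }
           assert (HQ1 : U (c * cos (l*s)) k = -1).
           { pose proof (U_sin _ _ Htau k) as E.
             replace (INR k * phi q) with (2*PI*INR q - phi q) in E
               by (unfold phi; fold N; unfold N; rewrite S_INR; field; rewrite <- S_INR; apply not_0_INR; lia).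
             rewrite sin_minus, sin_2nPI, cos_2nPI in E.
             apply Rmult_eq_reg_r with (sin (phi q)); [|lra]. rewrite E. ring. }
           apply two_Mc_rev; [exact Hcd| | | |]; rewrite ?HP, ?HQ1; ring.
Qed.
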